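(* Let $\mathbb{M}^2$ be a strictly convex normed plane, let $p,q\in\mathbb{M}^2$ be distinct points, and let $y$ be a point of the bisector $\mathrm{bis}(p,q)=\{z:\|z-p\|=\|z-q\|\}$. Then for every $\epsilon>0$, $\|y+\epsilon(y-p)-q\|<\|y+\epsilon(y-p)-p\|$.
   Context: $\mathbb{M}^2$ is $\mathbb{R}^2$ with a norm $\|\cdot\|$; it is strictly convex if its unit sphere contains no nondegenerate line segment. The paper phrases the hypothesis as $y\in Bi(p,q)$, where $Bi(p,q)\subseteq\mathrm{bis}(p,q)$ is a simple curve that can be chosen to pass through any given point of $\mathrm{bis}(p,q)$; hence the condition is that $y$ is a point of the bisector. *)

(* Defs.v *)
From HB Require Import structures.
From mathcomp Require Import all_boot all_order all_algebra.
From mathcomp Require Import reals.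
Set Implicit Arguments. Unset Strict Implicit. Unset Printing Implicit Defensive.
Import Order.TTheory GRing.Theory Num.Theory.
Local Open Scope ring_scope.

Definition is_norm (R : realType) (N : 'rV[R]_2 -> R) : Prop :=
  [/\ (forall x, 0 <= N x),
      (forall x, N x = 0 -> x = 0),
      (forall (a : R) x, N (a *: x) = `|a| * N x) &
      (forall x y, N (x + y) <= N x + N y)].

Definition strictly_convex (R : realType) (N : 'rV[R]_2 -> R) : Prop :=
  ~ (exists x y : 'rV[R]_2, x <> y /\
       forall t : R, 0 <= t <= 1 -> N ((1 - t) *: x + t *: y) = 1).

Definition bis (R : realType) (N : 'rV[R]_2 -> R) (p q : 'rV[R]_2) : 'rV[R]_2 -> Prop :=
  fun z => N (z - p) = N (z - q).

(* Main.v *)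
Require Import Defs.
From HB Require Import structures.
From mathcomp Require Import all_boot all_order all_algebra.
From mathcomp Require Import reals.
From mathcomp Require Import ring lra.
Import Order.TTheory GRing.Theory Num.Theory.
Local Open Scope ring_scope.

Section S.
Variables (R : realType) (N : 'rV[R]_2 -> R).
Hypothesis hN : is_norm N.

Lemma Ncomb x y (c d : R) : 0 <= c -> 0 <= d -> N (c *: x + d *: y) <= c * N x + d * N y.
Proof.
case: hN => _ _ hs ht => hc hd.
by apply: le_trans (ht _ _) _; rewrite !hs !ger0_norm.
Qed.

Lemma combE (l a b : R) (v u : 'rV[R]_2) :
  l *: (a *: v + b *: u) = (l * a) *: v + (l * b) *: u.
Proof. by rewrite scalerDr !scalerA. Qed.

Lemma seg (u v : 'rV[R]_2) (Nu : N u = 1) (Nv : N v = 1) (t0 : R)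
  (h0 : 0 < t0) (h1 : t0 < 1) (h : N ((1 - t0) *: v + t0 *: u) = 1) :
  forall t, 0 <= t <= 1 -> N ((1 - t) *: v + t *: u) = 1.
Proof.
move=> t /andP[t0' t1].
have hle : N ((1 - t) *: v + t *: u) <= 1.
  apply: le_trans (@Ncomb v u (1 - t) t _ _) _; rewrite ?Nu ?Nv; lra.
apply/eqP; rewrite eq_le hle /=.
set f := N _ in hle *.
case: (leP t t0) => ht.
- have t1' : t < 1 by lra.
  pose l := (1 - t0) / (1 - t).
  have hl1 : l * (1 - t) = 1 - t0 by rewrite /l mulfVK //; lra.
  have hl0 : 0 < l by rewrite /l divr_gt0 //; lra.
  have hlle : l <= 1 by rewrite /l ler_pdivrMr; lra.
  have E : (1 - t0) *: v + t0 *: u = l *: ((1 - t) *: v + t *: u) + (1 - l) *: u.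
    by rewrite combE -addrA -scalerDl hl1; congr (_ + _ *: _); lra.
  have := @Ncomb ((1 - t) *: v + t *: u) u l (1 - l) (ltW hl0) (ltac:(lra)).
  rewrite -E h Nu -/f => H.
  have : l * 1 <= l * f by lra.
  by rewrite ler_pM2l.
- pose l := t0 / t.
  have ht0 : 0 < t by lra.
  have hl1 : l * t = t0 by rewrite /l mulfVK //; lra.
  have hl0 : 0 < l by rewrite /l divr_gt0 //; lra.
  have hlle : l <= 1 by rewrite /l ler_pdivrMr; lra.
  have E : (1 - t0) *: v + t0 *: u = l *: ((1 - t) *: v + t *: u) + (1 - l) *: v.
    rewrite combE addrAC -scalerDl hl1; congr (_ *: _ + _); lra.
  have := @Ncomb ((1 - t) *: v + t *: u) v l (1 - l) (ltW hl0) (ltac:(lra)).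
  rewrite -E h Nv -/f => H.
  have : l * 1 <= l * f by lra.
  by rewrite ler_pM2l.
Qed.
End S.

Theorem lemma6p1 (R : realType) (N : 'rV[R]_2 -> R)
  (hN : is_norm N) (hsc : strictly_convex N)
  (p q y : 'rV[R]_2) (hpq : p <> q) (hy : bis N p q y)
  (eps : R) (heps : 0 < eps) :
  N (y + eps *: (y - p) - q) < N (y + eps *: (y - p) - p).
Proof.
have [N0 Nz Ns Nt] := hN.
rewrite /bis in hy.
set a := y - p in hy *; set b := y - q in hy *.
have E1 : y + eps *: (y - p) - q = b + eps *: a by rewrite /a /b addrAC.
have E2 : y + eps *: (y - p) - p = (1 + eps) *: a by rewrite scalerDl scale1r /a addrAC.
rewrite E1 E2 Ns ger0_norm; last lra.
set r := N a in hy *.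
have rpos : 0 < r.
  rewrite lt_def N0 andbT; apply/eqP => r0.
  apply: hpq; have a0 := Nz _ r0; have b0 := Nz _ (etrans (esym hy) r0).
  move/eqP: a0; move/eqP: b0; rewrite /a /b !subr_eq0 => /eqP <- /eqP <-; done.
rewrite ltNge; apply/negP => H.
pose u := r^-1 *: a; pose v := r^-1 *: b.
have Nu : N u = 1 by rewrite Ns ger0_norm ?invr_ge0 ?(ltW rpos) // mulVf // gt_eqF.
have Nv : N v = 1 by rewrite Ns ger0_norm ?invr_ge0 ?(ltW rpos) // -hy mulVf // gt_eqF.
pose t0 := eps / (1 + eps).
have ht0 : 0 < t0 by rewrite divr_gt0 //; lra.
have ht1 : t0 < 1 by rewrite ltr_pdivrMr; lra.
have Ew : (1 - t0) *: v + t0 *: u = ((1 + eps) * r)^-1 *: (b + eps *: a).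
  rewrite /u /v; clearbody a b; rewrite scalerDr !scalerA; congr (_ *: _ + _ *: _);
  rewrite /t0; field; apply/andP; split; apply/negP => /eqP; lra.
have hw : N ((1 - t0) *: v + t0 *: u) = 1.
  apply/eqP; rewrite eq_le; apply/andP; split.
    apply: le_trans (@Ncomb R N hN v u (1 - t0) t0 _ _) _; rewrite ?Nu ?Nv; lra.
  rewrite Ew Ns ger0_norm; last by rewrite invr_ge0; apply: mulr_ge0; lra.
  by rewrite ler_pdivlMl ?mulr1 //; apply: mulr_gt0; lra.
have hseg := @seg R N hN _ _ Nu Nv _ ht0 ht1 hw.
apply: hsc; exists v, u; split => //.
move=> vu; apply: hpq.
have : r *: v = r *: u by rewrite vu.
rewrite /u /v !scalerKV ?gt_eqF // => ba.
move: ba; rewrite /a /b => /(congr1 (fun w => y - w)) /=.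
by rewrite !opprB ![y + (_ - y)]addrC !subrK => ->.
Qed.
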